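(* Let $G$ be a finite simple bipartite graph with bipartition $(X,Y)$ such that no vertex in $X$ is adjacent to every vertex of $Y$. Then $$\sum\left(\frac{|X|d(x)-|Y|d(y)}{(|X|-d(y))(|Y|-d(x))}\;:\; x\in X,\ y\in Y,\ xy\notin E(G)\right)\geq 0.$$
   Context: $d(v)$ denotes the degree of a vertex $v$ in $G$; the sum ranges over all pairs $(x,y)$ with $x\in X$, $y\in Y$ and $x,y$ non-adjacent. *)

(* Defs.v *)
From mathcomp Require Import all_boot all_order all_algebra.
Set Implicit Arguments. Unset Strict Implicit. Unset Printing Implicit Defensive.

Definition simple_graph (T : finType) (e : rel T) : Prop :=
  symmetric e /\ irreflexive e.

Definition bipartition (T : finType) (e : rel T) (X Y : {set T}) : Prop :=
  [/\ X :&: Y = set0, X :|: Y = setT &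
      forall u v, e u v -> (u \in X) && (v \in Y) || (u \in Y) && (v \in X)].

Definition deg (T : finType) (e : rel T) (v : T) : nat := #|[set u | e v u]|.

(* Main.v *)
Require Import Defs.
From mathcomp Require Import all_boot all_order all_algebra.
From mathcomp Require Import ring lra.
Import Order.TTheory GRing.Theory Num.Theory.
Local Open Scope ring_scope.

Lemma card_nonnb (T : finType) (e : rel T) (v : T) (Z : {set T}) :
  [set u | e v u] \subset Z ->
  #|[set z in Z | ~~ e v z]| = (#|Z| - deg e v)%N /\ (deg e v <= #|Z|)%N.
Proof.
move=> sub; split; last exact: subset_leq_card.
have -> : [set z in Z | ~~ e v z] = Z :\: [set u | e v u].
  by apply/setP => z; rewrite !inE andbC.
by rewrite cardsD (setIidPr sub).
Qed.

Arguments card_nonnb {T e v Z}.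

Lemma sum_const_div (R : realFieldType) (T : finType) (S : {set T}) (P : pred T) (c : R) (k : nat) :
  (forall z, (z \in S) = P z) -> #|S| = k ->
  \sum_(z | P z) c = k%:R * c.
Proof.
move=> HS Hk.
rewrite (eq_bigl (fun z => z \in S)); last by move=> z; rewrite HS.
by rewrite sumr_const Hk mulr_natl.
Qed.

Theorem proposition6p2 (R : realFieldType) (T : finType) (e : rel T)
    (X Y : {set T}) :
  simple_graph e -> bipartition e X Y ->
  (forall x, x \in X -> exists2 y, y \in Y & ~~ e x y) ->
  0 <= \sum_(x in X) \sum_(y in Y | ~~ e x y)
         ((#|X|%:R * (deg e x)%:R - #|Y|%:R * (deg e y)%:R) /
          ((#|X|%:R - (deg e y)%:R) * (#|Y|%:R - (deg e x)%:R)) : R).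
Proof.
move=> [esym eirr] [XY0 XYT ebip] Hx.
have XnY : forall v, v \in X -> v \in Y -> False.
  move=> v vX vY; have : v \in X :&: Y by rewrite inE vX vY.
  by rewrite XY0 inE.
have NX : forall x, x \in X -> [set u | e x u] \subset Y.
  move=> x xX; apply/subsetP => u; rewrite inE => /ebip.
  case/orP => /andP [] // /(XnY x xX) [].
have NY : forall y, y \in Y -> [set u | e y u] \subset X.
  move=> y yY; apply/subsetP => u; rewrite inE => /ebip.
  case/orP => /andP [] // /XnY /(_ yY) [].
set n := #|X|; set m := #|Y|.
have dxlt : forall x y, x \in X -> y \in Y -> ~~ e x y -> (deg e x < m)%N.
  move=> x y xX yY nxy; have [c1 c2] := card_nonnb (NX x xX).
  have : (0 < #|[set z in Y | ~~ e x z]|)%N.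
    by apply/card_gt0P; exists y; rewrite inE yY.
  rewrite c1 subn_gt0 //.
have Sy : forall y, y \in Y -> [set z in X | ~~ e z y] = [set z in X | ~~ e y z].
  by move=> y _; apply/setP => z; rewrite !inE esym.
have dylt : forall x y, x \in X -> y \in Y -> ~~ e x y -> (deg e y < n)%N.
  move=> x y xX yY nxy; have [c1 c2] := card_nonnb (NY y yY).
  have : (0 < #|[set z in X | ~~ e y z]|)%N.
    by apply/card_gt0P; exists x; rewrite inE xX esym.
  rewrite c1 subn_gt0 //.
have -> : \sum_(x in X) \sum_(y in Y | ~~ e x y)
         ((n%:R * (deg e x)%:R - m%:R * (deg e y)%:R) /
          ((n%:R - (deg e y)%:R) * (m%:R - (deg e x)%:R)) : R)
  = \sum_(x in X) \sum_(y in Y | ~~ e x y) (m%:R / (m%:R - (deg e x)%:R))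
    - \sum_(x in X) \sum_(y in Y | ~~ e x y) (n%:R / (n%:R - (deg e y)%:R) : R).
  rewrite -sumrB; apply: eq_bigr => x xX; rewrite -sumrB.
  apply: eq_bigr => y /andP [yY nxy].
  have h1 : (m%:R - (deg e x)%:R : R) != 0.
    by rewrite subr_eq0 eqr_nat eq_sym ltn_eqF // (dxlt x y).
  have h2 : (n%:R - (deg e y)%:R : R) != 0.
    by rewrite subr_eq0 eqr_nat eq_sym ltn_eqF // (dylt x y).
  by field; rewrite h1 h2.
have HA : \sum_(x in X) \sum_(y in Y | ~~ e x y) (m%:R / (m%:R - (deg e x)%:R) : R)
    = \sum_(x in X) (m%:R : R).
  apply: eq_bigr => x xX.
  have [c1 c2] := card_nonnb (NX x xX).
  rewrite (@sum_const_div R T [set z in Y | ~~ e x z] (fun z => (z \in Y) && ~~ e x z) _ (m - deg e x)%N);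
    [| by move=> z; rewrite inE | exact: c1].
  have [y yY nxy] := Hx x xX.
  have h1 : (m%:R - (deg e x)%:R : R) != 0.
    by rewrite subr_eq0 eqr_nat eq_sym ltn_eqF // (dxlt x y).
  by rewrite natrB // mulrC divfK.
have HB : \sum_(x in X) \sum_(y in Y | ~~ e x y) (n%:R / (n%:R - (deg e y)%:R) : R)
    <= \sum_(y in Y) (n%:R : R).
  rewrite (exchange_big_dep (fun y => y \in Y)) /=; last by move=> i j _ /andP [].
  apply: ler_sum => y yY.
  have [c1 c2] := card_nonnb (NY y yY).
  rewrite (@sum_const_div R T [set z in X | ~~ e y z] (fun z => (z \in X) && ((y \in Y) && ~~ e z y)) _ (n - deg e y)%N);
    [| by move=> z; rewrite !inE yY esym | exact: c1].
  rewrite natrB //.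
  have [h0|h1] := eqVneq (n%:R - (deg e y)%:R : R) 0.
    by rewrite h0 mul0r ler0n.
  by rewrite mulrC divfK.
rewrite subr_ge0 HA; apply: (le_trans HB).
by rewrite !sumr_const -!mulrnA mulnC.
Qed.
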